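(* Let $\mathcal{G}=(V,E)$ be a DAG with $V=[n]$, let $i,j\in V$ be distinct and $K\subseteq V\setminus\{i,j\}$ such that $K$ does not $d$-separate $i$ from $j$ in $\mathcal{G}$. Let $a,b\in[n]$ be distinct and $C\subseteq[n]\setminus\{a,b\}$. If \[ \phi_\mathcal{G}^\ast(\det\Sigma_{\{a\}\cup C,\{b\}\cup C})\in \langle \phi_\mathcal{G}^\ast(\det\Sigma_{\{i\}\cup K,\{j\}\cup K})\rangle : \Big(\prod_{S\subseteq V}\phi_\mathcal{G}^\ast(\det\Sigma_{S,S})\Big)^\infty, \] then $a\perp\!\!\!\perp b\mid C$ holds for every $\Sigma\in\mathcal{M}_{\mathcal{G},i\perp\!\!\!\perp j|K}$, i.e. $\det\Sigma_{\{a\}\cup C,\{b\}\cup C}=0$ for all such $\Sigma$.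
   Context: For a DAG $\mathcal{G}=(V,E)$ on $V=[n]$, let $\Lambda=(\lambda_{ij})$ with $\lambda_{ij}$ a free parameter if $i\to j\in E$ and $0$ otherwise, and $\Omega=\mathrm{diag}(\omega_1,\dots,\omega_n)$. Let $\phi_\mathcal{G}(\Lambda,\Omega)=(I-\Lambda)^{-T}\Omega(I-\Lambda)^{-1}$ and $\mathcal{M}_\mathcal{G}=\phi_\mathcal{G}(\mathbb{R}^E\times(0,\infty)^n)$, a set of positive definite matrices. $\mathbb{R}[\lambda,\omega]$ is the polynomial ring in the $\lambda_{ij}$ ($i\to j\in E$) and the $\omega_k$; $\phi_\mathcal{G}^\ast:\mathbb{R}[\sigma_{uv}]\to\mathbb{R}[\lambda,\omega]$ is the ring homomorphism sending $\sigma_{uv}$ to the $(u,v)$ entry of $\phi_\mathcal{G}(\Lambda,\Omega)$. $\Sigma_{A,B}$ is the submatrix with rows $A$, columns $B$. $\mathcal{M}_{\mathcal{G},i\perp\!\!\!\perp j|K}$ is the set of $\Sigma\in\mathcal{M}_\mathcal{G}$ with $\det\Sigma_{\{i\}\cup K,\{j\}\cup K}=0$. For an ideal $I$ and polynomial $g$, the saturation is $I:g^\infty=\{f: fg^k\in I\text{ for some }k\ge0\}$. $d$-separation is the standard criterion: $C$ $d$-separates $a,b$ if every path between them contains a non-collider in $C$ or a collider not in $C$ with no descendant in $C$. *)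

(* Defs.v *)
From HB Require Import structures.
From mathcomp Require Import all_boot all_order all_algebra.
From mathcomp Require Import mpoly.
From mathcomp Require Import reals.
Set Implicit Arguments. Unset Strict Implicit. Unset Printing Implicit Defensive.
Import Order.TTheory GRing.Theory Num.Theory.
Local Open Scope ring_scope.

Section Graphs.
Variable n : nat.
Implicit Types (E : rel 'I_n).

Definition is_DAG E : Prop := forall u v, E u v -> ~~ connect E v u.

Definition adj E : rel 'I_n := fun u v => E u v || E v u.

Definition is_path_between E (a b : 'I_n) (p : seq 'I_n) : Prop :=
  [/\ head a p = a, p != [::], path (adj E) a (behead p), last a p = b & uniq p].

Definition descendant E (v w : 'I_n) : bool := connect E v w.

Definition collider_at E (p : seq 'I_n) (k : nat) (x0 : 'I_n) : bool :=
  E (nth x0 p k.-1) (nth x0 p k) && E (nth x0 p k.+1) (nth x0 p k).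

Definition blocked E (C : {set 'I_n}) (p : seq 'I_n) (x0 : 'I_n) : Prop :=
  exists k, (0 < k < (size p).-1)%N /\
    ((~~ collider_at E p k x0 && (nth x0 p k \in C)) \/
     (collider_at E p k x0 && (nth x0 p k \notin C) &&
      [forall w, descendant E (nth x0 p k) w ==> (w \notin C)])).

Definition d_separates E (C : {set 'I_n}) (a b : 'I_n) : Prop :=
  forall p, is_path_between E a b p -> blocked E C p a.
End Graphs.

(* index map for rows {a} u C : position 0 is a, positions 1.. enumerate C *)
Definition idxAC (n : nat) (a : 'I_n) (C : {set 'I_n}) (i : 'I_#|C|.+1) : 'I_n :=
  if unlift ord0 i is Some k then enum_val k else a.
Arguments idxAC {n} a C i.

Section Minors.
Variables (T : comUnitRingType) (n : nat).


Definition minorAC (M : 'M[T]_n) (a b : 'I_n) (C : {set 'I_n}) : T :=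
  \det (\matrix_(i < #|C|.+1, j < #|C|.+1) M (idxAC a C i) (idxAC b C j)).

Definition pminor (M : 'M[T]_n) (S : {set 'I_n}) : T :=
  \det (\matrix_(i < #|S|, j < #|S|) M (enum_val i) (enum_val j)).

Definition phiG (L : 'M[T]_n) (w : 'rV[T]_n) : 'M[T]_n :=
  (invmx (1%:M - L))^T *m diag_mx w *m invmx (1%:M - L).
End Minors.

Section Rings.
Variables (R : realType) (n : nat).

(* variables of R[lambda, omega]: inl (u,v) is lambda_uv, inr k is omega_k.
   (variables lambda_uv for non-edges exist in this ring but are never used) *)
Definition LWvar := ('I_n * 'I_n + 'I_n)%type.
Definition nLW := #|{: LWvar}|.
Definition LWring := {mpoly R[nLW]}.

Definition Svar := ('I_n * 'I_n)%type.
Definition nS := #|{: Svar}|.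
Definition Sring := {mpoly R[nS]}.

Definition lam_var (u v : 'I_n) : LWring := 'X_(enum_rank (inl (u, v) : LWvar)).
Definition om_var (k : 'I_n) : LWring := 'X_(enum_rank (inr k : LWvar)).

Definition LambdaG (E : rel 'I_n) : 'M[LWring]_n :=
  \matrix_(u, v) (if E u v then lam_var u v else 0).
Definition OmegaG : 'rV[LWring]_n := \row_k om_var k.

Definition SigmaSym : 'M[Sring]_n := \matrix_(u, v) 'X_(enum_rank ((u, v) : Svar)).

Definition phistar (E : rel 'I_n) (f : Sring) : LWring :=
  comp_mpoly [tuple (let uv := enum_val t in phiG (LambdaG E) OmegaG uv.1 uv.2)
             | t < nS] f.

(* f in <g> : h^oo  (saturation of the principal ideal <g>) *)
Definition in_sat_principal (f g h : LWring) : Prop :=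
  exists (k : nat) (q : LWring), f * h ^+ k = q * g.

Definition in_model (E : rel 'I_n) (S : 'M[R]_n) : Prop :=
  exists (L : 'M[R]_n) (w : 'rV[R]_n),
    (forall u v, ~~ E u v -> L u v = 0) /\ (forall k, 0 < w 0 k) /\ S = phiG L w.
End Rings.

(* Main.v *)
Require Import Defs.
From HB Require Import structures.
From mathcomp Require Import all_boot all_order all_algebra.
From mathcomp Require Import mpoly.
From mathcomp Require Import reals.
Import Order.TTheory GRing.Theory Num.Theory.
Local Open Scope ring_scope.

Section Nil.
Variables (T : pzRingType) (n : nat) (E : rel 'I_n).
Hypothesis dag : is_DAG E.

Definition rk (v : 'I_n) : nat := #|[set x | connect E v x]|.

Lemma rk_lt u v : E u v -> (rk v < rk u)%N.
Proof.
move=> Euv; apply: proper_card; apply/properP; split.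
  apply/subsetP=> x; rewrite !inE => cvx.
  by apply: connect_trans cvx; apply: connect1.
exists u; rewrite !inE ?connect0 //.
exact: dag.
Qed.

Definition pw (M : 'M[T]_n) k := iter k (fun X => X *m M) 1%:M.

Lemma pw_rk (M : 'M[T]_n) : (forall u v, ~~ E u v -> M u v = 0) ->
  forall k u v, pw M k u v != 0 -> (rk v + k <= rk u)%N.
Proof.
move=> HM; elim=> [|k IH] u v /=.
  rewrite mxE => nz; have e : u = v.
    by apply/eqP; apply: contraNT nz => /negPf ->; exact/eqP/mulr0n.
  by rewrite e addn0.
rewrite mxE => nz.
have [w /andP [h1 h2]] : exists w, (pw M k u w != 0) && (M w v != 0).
  apply/existsP; apply: contraNT nz; rewrite negb_exists => /forallP H.
  apply/eqP; apply: big1 => w _.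
  move: (H w); rewrite negb_and !negbK => /orP [] /eqP ->;
    by rewrite ?mul0r ?mulr0.
have Ewv : E w v by apply: contraNT h2 => /HM ->.
have := IH _ _ h1; have := @rk_lt w v Ewv.
rewrite addnS; move=> a b; apply: leq_trans b; by rewrite ltn_add2r.
Qed.

Lemma pw_n (M : 'M[T]_n) : (forall u v, ~~ E u v -> M u v = 0) -> pw M n = 0.
Proof.
move=> HM; apply/matrixP=> u v; rewrite mxE; apply/eqP; apply: contraT => nz.
have := @pw_rk M HM n u v nz.
have h1 : (rk u <= n)%N by rewrite /rk; apply: leq_trans (max_card _) _; rewrite card_ord.
have h2 : (0 < rk v)%N by rewrite /rk; apply/card_gt0P; exists v; rewrite inE connect0.
move=> h; have := leq_trans h h1; rewrite -[X in (_ <= X)%N]add0n leq_add2r leqn0.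
by move/eqP=> e; rewrite e in h2.
Qed.

Lemma sum_pw (M : 'M[T]_n) m :
  (\sum_(k < m) pw M k) *m (1%:M - M) = 1%:M - pw M m.
Proof.
elim: m => [|m IH]; first by rewrite big_ord0 mul0mx /= subrr.
rewrite big_ord_recr /= mulmxDl IH mulmxBr mulmx1.
by rewrite addrA subrK.
Qed.

End Nil.

Lemma unit_nil (T : comUnitRingType) n (E : rel 'I_n) (M : 'M[T]_n) :
  is_DAG E -> (forall u v, ~~ E u v -> M u v = 0) -> (1%:M - M) \in unitmx.
Proof.
move=> dag HM; have h := @sum_pw T n M n.
rewrite (@pw_n T n E dag M HM) subr0 in h.
by have [] := mulmx1_unit h.
Qed.

Lemma map_invmx_unit (S T : comUnitRingType) (f : {rmorphism S -> T}) n (A : 'M[S]_n) :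
  A \in unitmx -> map_mx f (invmx A) = invmx (map_mx f A).
Proof.
move=> uA.
have h : map_mx f (invmx A) *m map_mx f A = 1%:M by rewrite -map_mxM mulVmx // map_mx1.
have [_ uA'] := mulmx1_unit h.
by rewrite -[LHS](mulmxK uA') h mul1mx.
Qed.

Lemma minorAC_map (S T : comUnitRingType) (g : {rmorphism S -> T}) n (M : 'M[S]_n) a b C :
  g (minorAC M a b C) = minorAC (map_mx g M) a b C.
Proof. by rewrite /minorAC -det_map_mx; congr (\det _); apply/matrixP => ? ?; rewrite !mxE. Qed.

Lemma pminor_map (S T : comUnitRingType) (g : {rmorphism S -> T}) n (M : 'M[S]_n) C :
  g (pminor M C) = pminor (map_mx g M) C.
Proof. by rewrite /pminor -det_map_mx; congr (\det _); apply/matrixP => ? ?; rewrite !mxE. Qed.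

Section Eval.
Variables (R : realType) (n : nat) (E : rel 'I_n) (L : 'M[R]_n) (w : 'rV[R]_n).
Hypothesis dag : is_DAG E.
Hypothesis HL : forall u v, ~~ E u v -> L u v = 0.

Definition xv (t : 'I_(nLW n)) : R :=
  match enum_val t with inl uv => L uv.1 uv.2 | inr k => w 0 k end.

Local Notation ev := (meval xv).

Lemma ev_Lambda : map_mx ev (LambdaG R E) = L.
Proof.
apply/matrixP=> u v; rewrite !mxE.
case: ifP => e; last by rewrite meval0 HL // e.
by rewrite /lam_var mevalXU /xv enum_rankK.
Qed.

Lemma ev_Omega : map_mx ev (OmegaG R n) = w.
Proof.
by apply/matrixP=> u v; rewrite !mxE /om_var mevalXU /xv enum_rankK (ord1 u).
Qed.

Lemma ev_phi : map_mx ev (phiG (LambdaG R E) (OmegaG R n)) = phiG L w.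
Proof.
have HLam : forall u v, ~~ E u v -> LambdaG R E u v = 0.
  by move=> u v e; rewrite mxE (negPf e).
rewrite /phiG !map_mxM -map_trmx map_diag_mx map_invmx_unit; last exact: unit_nil dag HLam.
by rewrite map_mxB map_mx1 ev_Lambda ev_Omega.
Qed.

Definition yv (Sg : 'M[R]_n) (s : 'I_(nS n)) : R := Sg (enum_val s).1 (enum_val s).2.

Lemma ev_phistar f : ev (phistar E f) = meval (yv (phiG L w)) f.
Proof.
rewrite /phistar comp_mpoly_meval; apply: meval_eq => s.
rewrite tnth_mktuple /yv -ev_phi; rewrite [RHS]mxE; reflexivity.
Qed.

Lemma ev_Sigma (Sg : 'M[R]_n) : map_mx (meval (yv Sg)) (SigmaSym R n) = Sg.
Proof.
by apply/matrixP=> u v; rewrite !mxE mevalXU /yv enum_rankK.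
Qed.
End Eval.

Lemma pd_minor (R : realType) n (A : 'M[R]_n) (w : 'rV[R]_n) (S : {set 'I_n}) :
  A \in unitmx -> (forall k, 0 < w 0 k) ->
  pminor (A^T *m diag_mx w *m A) S != 0.
Proof.
move=> uA wpos.
set m := #|S|.
pose f := fun i : 'I_m => (enum_val i : 'I_n).
pose P : 'M[R]_(m, n) := \matrix_(i, r) (f i == r)%:R.
have selP : forall p (X : 'M[R]_(n, p)), P *m X = \matrix_(i, r) X (f i) r.
  move=> p X; apply/matrixP => i r; rewrite !mxE (bigD1 (f i)) //= big1 => [|r' ne].
    by rewrite mxE eqxx mul1r addr0.
  by rewrite mxE eq_sym (negPf ne) mul0r.
have selPT : forall p (Y : 'M[R]_(p, n)), Y *m P^T = \matrix_(i, j) Y i (f j).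
  move=> p Y; apply: trmx_inj; rewrite trmx_mul trmxK selP.
  by apply/matrixP => i j; rewrite !mxE.
have PP : P *m P^T = 1%:M.
  rewrite selPT; apply/matrixP => i j; rewrite !mxE.
  by rewrite (inj_eq enum_val_inj).
set Sg := A^T *m diag_mx w *m A.
have QE : \matrix_(i < m, j < m) Sg (f i) (f j) = P *m Sg *m P^T.
  by rewrite selPT selP; apply/matrixP => i j; rewrite !mxE.
rewrite /pminor -/m.
have -> : \matrix_(i < m, j < m) Sg (enum_val i) (enum_val j) = P *m Sg *m P^T.
  by rewrite -QE.
apply/det0P => -[v nzv vQ].
set z := v *m P *m A^T.
have zz : z *m diag_mx w *m z^T = 0.
  rewrite /z !trmx_mul trmxK.
  have -> : v *m P *m A^T *m diag_mx w *m (A *m (P^T *m v^T))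
          = v *m (P *m Sg *m P^T) *m v^T by rewrite /Sg !mulmxA.
  by rewrite vQ mul0mx.
have z0 : z = 0.
  move/matrixP: zz => /(_ 0 0); rewrite mul_mx_diag !mxE => hs.
  have nn : forall k : 'I_n, true -> 0 <= (\matrix_(i0, j) (z i0 j * w 0 j)) 0 k * z^T k 0.
    by move=> k' _; rewrite !mxE mulrAC -expr2 mulr_ge0 // ?sqr_ge0 // ltW.
  have hk := psumr_eq0P nn hs.
  apply/matrixP => i k; rewrite (ord1 i) [RHS]mxE.
  have : z 0 k * w 0 k * z 0 k = 0.
    by have := hk k isT; rewrite !mxE.
  rewrite mulrAC -expr2 => /eqP; rewrite mulf_eq0 (gt_eqF (wpos k)) orbF sqrf_eq0 => /eqP //.

have vP : v *m P = 0.
  have uAT : A^T \in unitmx by rewrite unitmx_tr.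
  by rewrite -[v *m P](mulmxK uAT) -/z z0 mul0mx.
by move/eqP: nzv; apply; rewrite -[v]mulmx1 -PP mulmxA vP mul0mx.
Qed.

Theorem corollary3p6 (R : realType) (n : nat) (E : rel 'I_n)
  (i j : 'I_n) (K : {set 'I_n}) (a b : 'I_n) (C : {set 'I_n}) :
  is_DAG E ->
  i != j -> i \notin K -> j \notin K ->
  ~ d_separates E K i j ->
  a != b -> a \notin C -> b \notin C ->
  in_sat_principal
    (@phistar R n E (minorAC (SigmaSym R n) a b C))
    (@phistar R n E (minorAC (SigmaSym R n) i j K))
    (\prod_(S : {set 'I_n}) @phistar R n E (pminor (SigmaSym R n) S)) ->
  forall Sigma : 'M[R]_n,
    in_model E Sigma -> minorAC Sigma i j K = 0 ->
    minorAC Sigma a b C = 0.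
Proof.
move=> dag _ _ _ _ _ _ _ [k [q Hq]] Sigma [L [w [HL [wpos ->]]]] Hij.
have ev_f : forall f, meval (xv R n L w) (phistar E f) = meval (yv R n (phiG L w)) f.
  by move=> f; exact: (ev_phistar R n E L w dag HL).
have := congr1 (meval (xv R n L w)) Hq.
rewrite !rmorphM rmorphXn /= rmorph_prod /= !ev_f.
rewrite !minorAC_map ev_Sigma Hij mulr0.
under eq_bigr => S _ do rewrite ev_f pminor_map ev_Sigma.
move/eqP; rewrite mulf_eq0 expf_eq0 => /orP [/eqP //|/andP [_ /eqP]].
move/eqP; rewrite prodf_seq_eq0 => /hasP [S _ /= /eqP].
have uA : invmx (1%:M - L) \in unitmx by rewrite unitmx_inv; exact: (unit_nil R n E L dag HL).
by move/eqP: (pd_minor R n (invmx (1%:M - L)) w S uA wpos).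
Qed.
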